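(* Let $\mathbb{X}$ be a Banach space, let $\Sigma\subset\mathbb{X}$ be connected, and let $\mathscr{H}$ be a multiresolution family for $\Sigma$ with inflation factor $A_{\mathscr{H}}>1$. Let $\mathscr{H}_0$ be the set of balls $Q\in\mathscr{H}$ such that $\beta_\Sigma(Q)=0$ or $\Sigma\subset12Q$. Then for every $s>1$, $$\sum_{Q\in\mathscr{H}_0}\beta_\Sigma(Q)^s\,\mathrm{diam}\,Q\leq C(s)\,A_{\mathscr{H}}\,\mathcal{H}^1(\Sigma),$$ where $C(s)<\infty$ depends only on $s$ (and $C(s)\to\infty$ as $s\downarrow1$).
   Context: All Banach spaces are real. For a closed ball $Q=B(x,r)$ and $\lambda>0$, $\lambda Q=B(x,\lambda r)$. For a nonempty set $E$ and a set $Q$ of positive diameter, $\beta_E(Q)=\inf_L\sup_{x\in E\cap Q}\mathrm{dist}(x,L)/\mathrm{diam}\,Q$ if $E\cap Q\neq\emptyset$ ($L$ ranging over lines), and $\beta_E(Q)=0$ otherwise. For $\rho>0$, a $\rho$-net for $E$ is a set $X\subset E$ with $|y-z|\geq\rho$ for distinct $y,z\in X$ and $\mathrm{dist}(x,X)<\rho$ for all $x\in E$. A multiresolution family for $E$ with inflation factor $A>1$ is $\{B(x,A2^{-k}):x\in X_k,\ k\in\mathbb{Z}\}$ (indexed by pairs $(k,x)$), where $(X_k)_{k\in\mathbb{Z}}$ is nested ($X_k\subset X_{k+1}$) and each $X_k$ is a $2^{-k}$-net for $E$. $\mathcal{H}^1$ is one-dimensional Hausdorff measure. *)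

(* Defs.v *)
From Stdlib Require Import Reals Lra ZArith List Classical ClassicalEpsilon.
Open Scope R_scope.

(* sup_set P = least upper bound of P if it exists (P nonempty & bounded above),
   and 0 otherwise (convention, only used where the lub exists). *)
Definition sup_set (P : R -> Prop) : R :=
  match excluded_middle_informative (exists l, is_lub P l) with
  | left H => proj1_sig (constructive_indefinite_description _ H)
  | right _ => 0
  end.
Definition inf_set (P : R -> Prop) : R := - sup_set (fun y => P (- y)).

(* real power b^s with the convention 0^s = 0 (s > 0) *)
Definition rpow (b s : R) : R := if Rlt_dec 0 b then Rpower b s else 0.

Record Banach := {
  V :> Type;
  vzero : V;
  vadd : V -> V -> V;
  vopp : V -> V;
  vscal : R -> V -> V;
  vnorm : V -> R;
  vadd_assoc : forall x y z, vadd x (vadd y z) = vadd (vadd x y) z;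
  vadd_comm : forall x y, vadd x y = vadd y x;
  vadd_0 : forall x, vadd x vzero = x;
  vadd_opp : forall x, vadd x (vopp x) = vzero;
  vscal_1 : forall x, vscal 1 x = x;
  vscal_assoc : forall a b x, vscal a (vscal b x) = vscal (a * b) x;
  vscal_distr_v : forall a x y, vscal a (vadd x y) = vadd (vscal a x) (vscal a y);
  vscal_distr_r : forall a b x, vscal (a + b) x = vadd (vscal a x) (vscal b x);
  vnorm_eq0 : forall x, vnorm x = 0 -> x = vzero;
  vnorm_scal : forall a x, vnorm (vscal a x) = Rabs a * vnorm x;
  vnorm_triangle : forall x y, vnorm (vadd x y) <= vnorm x + vnorm y;
  vcomplete : forall u : nat -> V,
      (forall eps, 0 < eps -> exists N, forall m n, (N <= m)%nat -> (N <= n)%nat ->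
          vnorm (vadd (u m) (vopp (u n))) < eps) ->
      exists l, forall eps, 0 < eps -> exists N, forall n, (N <= n)%nat ->
          vnorm (vadd (u n) (vopp l)) < eps
}.

Section Metric.
Variable X : Banach.

Definition dist (x y : X) : R := vnorm X (vadd X x (vopp X y)).

Definition ball (x : X) (r : R) : X -> Prop := fun y => dist y x <= r.

(* diameter: sup of mutual distances (0 for the empty set) *)
Definition diam (E : X -> Prop) : R :=
  sup_set (fun d => exists x y, E x /\ E y /\ d = dist x y).

Definition dist_set (x : X) (L : X -> Prop) : R :=
  inf_set (fun d => exists y, L y /\ d = dist x y).

Definition is_line (L : X -> Prop) : Prop :=
  exists p v, v <> vzero X /\ forall y, L y <-> exists t : R, y = vadd X p (vscal X t v).

Definition beta (E Q : X -> Prop) : R :=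
  if excluded_middle_informative (0 < diam Q /\ exists x, E x /\ Q x) then
    inf_set (fun b => exists L, is_line L /\
      b = sup_set (fun d => exists x, E x /\ Q x /\ d = dist_set x L / diam Q))
  else 0.

Definition is_open (U : X -> Prop) : Prop :=
  forall x, U x -> exists r, 0 < r /\ forall y, dist y x < r -> U y.

Definition connected (S : X -> Prop) : Prop :=
  forall U W : X -> Prop, is_open U -> is_open W ->
    (forall x, S x -> U x \/ W x) ->
    (exists x, S x /\ U x) -> (exists x, S x /\ W x) ->
    exists x, S x /\ U x /\ W x.

Definition is_net (E : X -> Prop) (rho : R) (N : X -> Prop) : Prop :=
  (forall x, N x -> E x) /\
  (forall y z, N y -> N z -> y <> z -> rho <= dist y z) /\
  (forall x, E x -> exists y, N y /\ dist x y < rho).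

Definition bpow (k : Z) : R := powerRZ 2 (- k).

Definition multiresolution_nets (E : X -> Prop) (Xk : Z -> X -> Prop) : Prop :=
  (forall k x, Xk k x -> Xk (k + 1)%Z x) /\
  (forall k, is_net E (bpow k) (Xk k)).

(* the ball of the multiresolution family with index (k,x) and inflation A *)
Definition mball (A : R) (kx : Z * X) : X -> Prop :=
  ball (snd kx) (A * bpow (fst kx)).

(* one-dimensional Hausdorff measure: "H^1(E) <= h" unfolded:
   for every delta > 0, H^1_delta(E) = inf { sum_i diam E_i : E subset U_i E_i,
   diam E_i <= delta } is <= h. *)
Definition H1_delta_le (E : X -> Prop) (delta h : R) : Prop :=
  forall eps, 0 < eps -> exists Es : nat -> X -> Prop,
    (forall x, E x -> exists i, Es i x) /\
    (forall i x y, Es i x -> Es i y -> dist x y <= delta) /\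
    (forall n, sum_f_R0 (fun i => diam (Es i)) n <= h + eps).

Definition H1_le (E : X -> Prop) (h : R) : Prop :=
  forall delta, 0 < delta -> H1_delta_le E delta h.

End Metric.

Arguments dist {X}. Arguments ball {X}. Arguments diam {X}. Arguments beta {X}.
Arguments connected {X}. Arguments multiresolution_nets {X}. Arguments mball {X}.
Arguments H1_le {X}.

Fixpoint lsum {T : Type} (f : T -> R) (l : list T) : R :=
  match l with nil => 0 | cons a l' => f a + lsum f l' end.

(* Main.v *)
Require Import Defs.
From Stdlib Require Import Reals ZArith List.
From Stdlib Require Import Lra Classical ClassicalEpsilon Arith Lia.
Open Scope R_scope.

Lemma sup_is_lub (P : R -> Prop) :
  (exists x, P x) -> (exists M, forall x, P x -> x <= M) -> is_lub P (sup_set P).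
Proof.
  intros Hne [M HM]. unfold sup_set.
  destruct (excluded_middle_informative _) as [H|H].
  - destruct (constructive_indefinite_description _ H) as [l Hl]; simpl; exact Hl.
  - exfalso; apply H. destruct (completeness P) as [m Hm].
    + exists M; exact HM.
    + exact Hne.
    + exists m; exact Hm.
Qed.

Lemma sup_le (P : R -> Prop) M : (forall x, P x -> x <= M) -> 0 <= M -> sup_set P <= M.
Proof.
  intros HM H0. unfold sup_set.
  destruct (excluded_middle_informative _) as [H|H].
  - destruct (constructive_indefinite_description _ H) as [l Hl]; simpl.
    apply (proj2 Hl). exact HM.
  - exact H0.
Qed.

Lemma sup_ge0 (P : R -> Prop) : (forall x, P x -> 0 <= x) -> 0 <= sup_set P.
Proof.
  intros HP. unfold sup_set.
  destruct (excluded_middle_informative _) as [H|H].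
  - destruct (constructive_indefinite_description _ H) as [l Hl]; simpl.
    destruct (classic (exists x, P x)) as [[x Hx]|Hn].
    + specialize (HP x Hx). specialize (proj1 Hl x Hx). lra.
    + assert (l <= l - 1). { apply (proj2 Hl). intros x Hx. exfalso; apply Hn; eauto. }
      lra.
  - lra.
Qed.

Lemma le_sup (P : R -> Prop) x M : P x -> (forall y, P y -> y <= M) -> x <= sup_set P.
Proof.
  intros Hx HM. destruct (sup_is_lub P) as [H1 H2]; eauto.
Qed.

Lemma inf_le (P : R -> Prop) x M : P x -> (forall y, P y -> M <= y) -> inf_set P <= x.
Proof.
  intros Hx HM. unfold inf_set.
  assert (- x <= sup_set (fun y => P (- y))).
  { apply le_sup with (M := - M).
    - rewrite Ropp_involutive; exact Hx.
    - intros y Hy. specialize (HM _ Hy). lra. }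
  lra.
Qed.

Lemma inf_ge0 (P : R -> Prop) : (forall y, P y -> 0 <= y) -> 0 <= inf_set P.
Proof.
  intros HP. unfold inf_set.
  assert (sup_set (fun y => P (- y)) <= 0).
  { apply sup_le; [|lra]. intros y Hy. specialize (HP _ Hy). lra. }
  lra.
Qed.

Lemma inf_empty (P : R -> Prop) : (forall y, ~ P y) -> inf_set P = 0.
Proof.
  intros HP. unfold inf_set.
  assert (sup_set (fun y => P (- y)) <= 0).
  { apply sup_le; [|lra]. intros y Hy. exfalso; eapply HP; eauto. }
  assert (0 <= sup_set (fun y => P (- y))).
  { apply sup_ge0. intros y Hy. exfalso; eapply HP; eauto. }
  lra.
Qed.

Section Alg.
Variable X : Banach.
Notation "a +v b" := (vadd X a b) (at level 50, left associativity).
Notation "-v a" := (vopp X a) (at level 35).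
Notation "0v" := (vzero X).

Lemma add0l (x : X) : 0v +v x = x.
Proof. rewrite vadd_comm, vadd_0; reflexivity. Qed.

Lemma addcancel (a x y : X) : a +v x = a +v y -> x = y.
Proof.
  intros H. assert (E : (-v a) +v (a +v x) = (-v a) +v (a +v y)) by (rewrite H; reflexivity).
  rewrite !vadd_assoc in E. rewrite (vadd_comm _ (-v a) a), vadd_opp, !add0l in E. exact E.
Qed.

Lemma scal0 (x : X) : vscal X 0 x = 0v.
Proof.
  apply (addcancel (vscal X 0 x)). rewrite vadd_0, <- vscal_distr_r, Rplus_0_l. reflexivity.
Qed.

Lemma opp_scal (x : X) : -v x = vscal X (-1) x.
Proof.
  apply (addcancel x). rewrite vadd_opp. rewrite <- (vscal_1 X x) at 1.
  rewrite <- vscal_distr_r. replace (1 + -1) with 0 by ring. rewrite scal0; reflexivity.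
Qed.

Lemma norm0 : vnorm X 0v = 0.
Proof. rewrite <- (scal0 0v), vnorm_scal, Rabs_R0; ring. Qed.

Lemma norm_opp (x : X) : vnorm X (-v x) = vnorm X x.
Proof. rewrite opp_scal, vnorm_scal, Rabs_left by lra. ring. Qed.

Lemma norm_nonneg (x : X) : 0 <= vnorm X x.
Proof.
  pose proof (vnorm_triangle X x (-v x)) as H. rewrite vadd_opp, norm0, norm_opp in H. lra.
Qed.

Lemma opp_add (a b : X) : -v (a +v b) = (-v a) +v (-v b).
Proof. rewrite !opp_scal, vscal_distr_v; reflexivity. Qed.

Lemma opp_opp (a : X) : -v (-v a) = a.
Proof. rewrite !opp_scal, vscal_assoc. replace (-1 * -1) with 1 by ring. apply vscal_1. Qed.

Lemma dist_sym (x y : X) : Defs.dist x y = Defs.dist y x.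
Proof.
  unfold Defs.dist. rewrite <- norm_opp, opp_add, opp_opp, vadd_comm; reflexivity.
Qed.

Lemma dist_tri (x y z : X) : Defs.dist x z <= Defs.dist x y + Defs.dist y z.
Proof.
  unfold Defs.dist. eapply Rle_trans; [|apply vnorm_triangle].
  right. f_equal. rewrite <- vadd_assoc. f_equal.
  rewrite vadd_assoc, (vadd_comm _ (-v y) y), vadd_opp, add0l; reflexivity.
Qed.

Lemma dist_self (x : X) : Defs.dist x x = 0.
Proof. unfold Defs.dist. rewrite vadd_opp; apply norm0. Qed.

Lemma dist_nonneg (x y : X) : 0 <= Defs.dist x y.
Proof. apply norm_nonneg. Qed.

Lemma dist_add (x u : X) : Defs.dist (x +v u) x = vnorm X u.
Proof.
  unfold Defs.dist. f_equal. rewrite (vadd_comm _ x u), <- vadd_assoc, vadd_opp, vadd_0; reflexivity.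
Qed.

Lemma norm_pos (v : X) : v <> 0v -> 0 < vnorm X v.
Proof.
  intros H. destruct (norm_nonneg v) as [H'|H']; auto. exfalso; apply H, vnorm_eq0; auto.
Qed.

Lemma dist_rev (x y z : X) : Rabs (Defs.dist x z - Defs.dist y z) <= Defs.dist x y.
Proof.
  pose proof (dist_tri x y z). pose proof (dist_tri y x z). rewrite (dist_sym y x) in H0.
  apply Rabs_le; lra.
Qed.

End Alg.

Lemma conn_image (X : Banach) (S : X -> Prop) p q c t :
  connected S -> S p -> S q -> c <= Defs.dist q p -> 0 <= t <= c ->
  exists x, S x /\ Defs.dist x p = t.
Proof.
  intros Hc Hp Hq Hqp Ht.
  destruct (Req_dec t 0) as [E|Ht0].
  { exists p; split; auto. rewrite dist_self; auto. }
  destruct (classic (exists x, S x /\ Defs.dist x p = t)) as [H|Hn]; auto.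
  exfalso.
  destruct (Hc (fun x => Defs.dist x p < t) (fun x => t < Defs.dist x p)) as [x [_ [H1 H2]]].
  - intros x Hx. exists (t - Defs.dist x p). split; [lra|].
    intros y Hy. pose proof (dist_tri X y x p). lra.
  - intros x Hx. exists (Defs.dist x p - t). split; [lra|].
    intros y Hy. pose proof (dist_tri X x y p). rewrite dist_sym in Hy. lra.
  - intros x Hx. destruct (Rtotal_order (Defs.dist x p) t) as [H|[H|H]]; auto.
    exfalso; apply Hn; eauto.
  - exists p; split; auto. rewrite dist_self; lra.
  - exists q; split; auto. destruct (Req_dec (Defs.dist q p) t) as [E|E].
    + exfalso; apply Hn; eauto.
    + lra.
  - lra.
Qed.

Lemma geo_half n : sum_f_R0 (fun j => (/2)^(S j)) n = 1 - (/2)^(S n).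
Proof.
  induction n; simpl in *. - field. - rewrite IHn. field.
Qed.

Lemma sum_gen_le (f g : nat -> R) N j :
  (forall i, g i <= f i) -> (j <= N)%nat -> sum_f_R0 g N + (f j - g j) <= sum_f_R0 f N.
Proof.
  intros Hfg. induction N; intros Hj.
  - assert (j = 0%nat) by lia. subst. simpl. lra.
  - simpl. destruct (Nat.eq_dec j (S N)) as [E|E].
    + subst. pose proof (sum_growing g f N Hfg). lra.
    + assert (j <= N)%nat by lia. specialize (IHN H). specialize (Hfg (S N)). lra.
Qed.

Lemma sum_mono_n (g : nat -> R) n N :
  (forall i, 0 <= g i) -> (n <= N)%nat -> sum_f_R0 g n <= sum_f_R0 g N.
Proof.
  intros Hg. induction N; intros H.
  - assert (n = 0%nat) by lia. subst; lra.
  - destruct (Nat.eq_dec n (S N)) as [E|E].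
    + subst; lra.
    + assert (n <= N)%nat by lia. simpl. specialize (Hg (S N)). specialize (IHN H0). lra.
Qed.

Lemma cover1d (c eps : R) (g : nat -> R -> Prop) (a w : nat -> R) :
  0 <= c -> 0 < eps -> (forall j, 0 <= w j) ->
  (forall j u, g j u -> a j <= u <= a j + w j) ->
  (forall t, 0 <= t <= c -> exists j, g j t) ->
  exists n, c <= sum_f_R0 w n + eps.
Proof.
  intros Hc He Hw Hg Hcov.
  set (e := fun j => eps * (/2)^(S j) / 2).
  assert (Hepos : forall j, 0 < e j).
  { intro j. unfold e. apply Rmult_lt_0_compat; [|lra]. apply Rmult_lt_0_compat; auto.
    apply pow_lt; lra. }
  set (lo := fun j => a j - e j). set (up := fun j => a j + w j + e j).
  set (lam := fun j x => Rmax 0 (Rmin (x - lo j) (up j - lo j))).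
  assert (Hlup : forall j, lo j < up j).
  { intro j. unfold lo, up. specialize (Hepos j). specialize (Hw j). lra. }
  assert (Hl0 : forall j x, 0 <= lam j x).
  { intros. unfold lam. apply Rmax_l. }
  assert (Hlle : forall j x, lam j x <= w j + 2 * e j).
  { intros j x. unfold lam. specialize (Hlup j).
    unfold Rmax, Rmin; repeat destruct Rle_dec; unfold up, lo in *; lra. }
  assert (Hlmono : forall j x y, x <= y -> lam j x <= lam j y).
  { intros j x y Hxy. unfold lam. unfold Rmax, Rmin; repeat destruct Rle_dec; lra. }
  assert (Hllin : forall j x y, lo j <= x -> x <= y -> y <= up j -> lam j y = lam j x + (y - x)).
  { intros j x y H1 H2 H3. unfold lam. unfold Rmax, Rmin; repeat destruct Rle_dec; lra. }
  set (SS := fun x => 0 <= x <= c /\ exists n, x <= sum_f_R0 (fun i => lam i x) n).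
  assert (Hfin : forall n, sum_f_R0 (fun i => lam i c) n <= sum_f_R0 w n + eps).
  { intro n. eapply Rle_trans. apply sum_growing with (Bn := fun i => w i + (/2)^(S i) * eps).
    intro i. specialize (Hlle i c). unfold e in Hlle. lra.
    rewrite sum_plus. rewrite <- (scal_sum (fun i => (/2)^(S i)) n eps) .
    rewrite geo_half. assert (0 < (/2)^(S n)) by (apply pow_lt; lra).
    assert (0 < eps * (/2)^(S n)) by (apply Rmult_lt_0_compat; lra). nra. }
  assert (HS0 : SS 0).
  { split; [lra|]. exists 0%nat. simpl. apply Hl0. }
  assert (Hlub : is_lub SS (sup_set SS)).
  { apply sup_is_lub. eauto. exists c. intros x [Hx _]; lra. }
  set (sg := sup_set SS) in *.
  assert (Hsg : 0 <= sg <= c).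
  { split. apply (proj1 Hlub). exact HS0. apply (proj2 Hlub). intros x [Hx _]; lra. }
  destruct (Hcov sg Hsg) as [j Hj].
  specialize (Hg j sg Hj). pose proof (Hepos j) as Hej.
  assert (Hlo : lo j < sg) by (unfold lo; lra).
  assert (Hup : sg < up j) by (unfold up; lra).
  destruct (classic (exists x, SS x /\ lo j < x)) as [[x [Hx Hxl]]|Hn].
  2:{ exfalso. assert (sg <= lo j); [|lra]. apply (proj2 Hlub). intros x Hx.
      apply Rnot_lt_le. intro H. apply Hn; eauto. }
  assert (Hxs : x <= sg) by (apply (proj1 Hlub); auto).
  destruct Hx as [Hx [n Hn]].
  set (x' := Rmin c (up j)).
  assert (Hxx' : x <= x') by (unfold x'; unfold Rmin; destruct Rle_dec; lra).
  assert (Hx'u : x' <= up j) by apply Rmin_r.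
  assert (Hx'c : x' <= c) by apply Rmin_l.
  assert (HSx' : SS x').
  { split; [lra|]. exists (Nat.max n j).
    pose proof (sum_gen_le (fun i => lam i x') (fun i => lam i x) (Nat.max n j) j) as H1.
    simpl in H1. rewrite (Hllin j x x') in H1 by lra.
    assert (H2 : sum_f_R0 (fun i => lam i x) n <= sum_f_R0 (fun i => lam i x) (Nat.max n j))
      by (apply sum_mono_n; auto; lia).
    assert (H3 : sum_f_R0 (fun i => lam i x) (Nat.max n j) + (lam j x + (x' - x) - lam j x)
               <= sum_f_R0 (fun i => lam i x') (Nat.max n j)).
    { apply H1. intro i. apply Hlmono; lra. lia. }
    lra. }
  assert (Hx's : x' <= sg) by (apply (proj1 Hlub); auto).
  unfold x' in *. unfold Rmin in *. destruct (Rle_dec c (up j)).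
  - destruct HSx' as [_ [m Hm]]. exists m. specialize (Hfin m). lra.
  - lra.
Qed.

Section L.
Context {T : Type}.
Lemma lsum_le (f g : T -> R) l : (forall x, In x l -> f x <= g x) -> lsum f l <= lsum g l.
Proof. induction l; simpl; intros H. lra. pose proof (H a (or_introl eq_refl)).
  assert (lsum f l <= lsum g l) by (apply IHl; auto). lra. Qed.
Lemma lsum_const (c : R) (l : list T) : lsum (fun _ => c) l = INR (length l) * c.
Proof. induction l; simpl. ring. rewrite IHl. destruct (length l); simpl; ring. Qed.
Lemma lsum_zero (f : T -> R) l : (forall x, In x l -> f x = 0) -> lsum f l = 0.
Proof. induction l; simpl; intros H. auto. rewrite H, IHl; auto. ring. Qed.
Lemma lsum_nonneg (f : T -> R) l : (forall x, In x l -> 0 <= f x) -> 0 <= lsum f l.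
Proof. induction l; simpl; intros H. lra. pose proof (H a (or_introl eq_refl)).
  assert (0 <= lsum f l) by (apply IHl; auto). lra. Qed.
Lemma lsum_swap (F : T -> nat -> R) l N :
  lsum (fun p => sum_f_R0 (fun j => F p j) N) l = sum_f_R0 (fun j => lsum (fun p => F p j) l) N.
Proof.
  induction l; simpl.
  - induction N; simpl; auto. rewrite <- IHN; ring.
  - rewrite IHl. rewrite <- sum_plus. reflexivity.
Qed.
Lemma lsum_scal (k : R) (f : T -> R) l : lsum (fun x => k * f x) l = k * lsum f l.
Proof. induction l; simpl. ring. rewrite IHl; ring. Qed.
Lemma ex_uniform (P : T -> nat -> Prop) l :
  (forall p n m, (n <= m)%nat -> P p n -> P p m) ->
  (forall p, In p l -> exists n, P p n) -> exists N, forall p, In p l -> P p N.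
Proof.
  intros Hm. induction l; intros H.
  - exists 0%nat; intros p [].
  - destruct (H a (or_introl eq_refl)) as [n Hn].
    destruct IHl as [N HN]. { intros; apply H; simpl; auto. }
    exists (Nat.max n N). intros p [E|Hp].
    + subst. eapply Hm; [|eauto]. lia.
    + eapply Hm; [|eauto]. lia.
Qed.
End L.

Lemma approx_le a b k : 0 <= k -> (forall eps, 0 < eps -> a <= b + eps * k) -> a <= b.
Proof.
  intros Hk H. apply Rnot_lt_le. intro Hlt.
  specialize (H ((a - b) / (2 * (k + 1)))).
  assert (0 < (a - b) / (2 * (k + 1))) by (apply Rdiv_lt_0_compat; lra).
  specialize (H H0).
  assert ((a - b) / (2 * (k + 1)) * k < a - b).
  { unfold Rdiv. rewrite Rmult_assoc.
    assert (/ (2 * (k + 1)) * k < 1).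
    { apply (Rmult_lt_reg_l (2 * (k+1))). lra. rewrite <- Rmult_assoc, Rinv_r by lra. lra. }
    nra. }
  lra.
Qed.

Lemma diam_ge0 (X : Banach) (E : X -> Prop) : 0 <= diam E.
Proof. apply sup_ge0. intros x [a [b [_ [_ ->]]]]. apply dist_nonneg. Qed.

Lemma dist_le_diam (X : Banach) (E : X -> Prop) M x y :
  (forall a b, E a -> E b -> Defs.dist a b <= M) -> E x -> E y -> Defs.dist x y <= diam E.
Proof.
  intros HM Hx Hy. apply le_sup with (M := M). eauto 7.
  intros r [a [b [Ha [Hb ->]]]]. auto.
Qed.

Lemma sep_H1 (X : Banach) (S : X -> Prop) h c (ps : list X) :
  connected S -> H1_le S h -> 0 < c -> NoDup ps ->
  (forall p, In p ps -> S p /\ exists q, S q /\ c <= Defs.dist q p) ->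
  (forall p p', In p ps -> In p' ps -> p <> p' -> 3 * c <= Defs.dist p p') ->
  INR (length ps) * c <= 2 * h.
Proof.
  intros Hcon HH Hc Hnd Hps Hsep.
  apply (approx_le _ _ (INR (length ps) + 2)). { pose proof (pos_INR (length ps)); lra. }
  intros eps He.
  destruct (HH (c/2) ltac:(lra) eps He) as [Es [Hcov [Hdel Hsum]]].
  set (d := fun j => diam (Es j)).
  assert (Hd0 : forall j, 0 <= d j) by (intro; apply diam_ge0).
  assert (Hdd : forall j x y, Es j x -> Es j y -> Defs.dist x y <= d j).
  { intros j x y Hx Hy. apply dist_le_diam with (M := c/2); auto. intros; eapply Hdel; eauto. }
  set (meets := fun p j => exists x, S x /\ Es j x /\ Defs.dist x p <= c).
  set (dp := fun p j => if excluded_middle_informative (meets p j) then d j else 0).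
  assert (Hdp0 : forall p j, 0 <= dp p j).
  { intros; unfold dp; destruct excluded_middle_informative; auto; lra. }
  assert (C1 : forall p, In p ps -> exists n, c <= sum_f_R0 (fun j => 2 * dp p j) n + eps).
  { intros p Hp. destruct (Hps p Hp) as [Sp [q [Sq Hq]]].
    set (g := fun j u => exists x, S x /\ Es j x /\ Defs.dist x p <= c /\ u = Defs.dist x p).
    set (a := fun j => match excluded_middle_informative (exists u, g j u) with
                       | left H => proj1_sig (constructive_indefinite_description _ H) - d j
                       | right _ => 0 end).
    apply (cover1d c eps g a (fun j => 2 * dp p j)); try lra.
    - intro j; specialize (Hdp0 p j); lra.
    - intros j u Hu. unfold a. destruct excluded_middle_informative as [H|H].
      2:{ exfalso; eauto. }
      destruct (constructive_indefinite_description _ H) as [u0 Hu0]. simpl.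
      destruct Hu as [x [Sx [Ex [Hxc ->]]]]. destruct Hu0 as [x0 [Sx0 [Ex0 [Hx0c ->]]]].
      unfold dp. destruct excluded_middle_informative as [Hm|Hm].
      2:{ exfalso; apply Hm; exists x; auto. }
      pose proof (dist_rev X x x0 p). pose proof (Hdd j x x0 Ex Ex0).
      unfold Rabs in H0; destruct Rcase_abs in H0; lra.
    - intros t Ht. destruct (conn_image X S p q c t Hcon Sp Sq Hq Ht) as [x [Sx Hx]].
      destruct (Hcov x Sx) as [j Hj]. exists j. exists x. repeat split; auto; lra. }
  assert (C2 : forall j, lsum (fun p => dp p j) ps <= d j).
  { intro j. clear C1 Hsum.
    induction ps as [|a ps IH]; simpl. apply Hd0.
    inversion Hnd; subst.
    unfold dp at 1. destruct excluded_middle_informative as [Hm|Hm].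
    - rewrite lsum_zero. lra. intros p Hp. unfold dp. destruct excluded_middle_informative as [Hm'|]; auto.
      exfalso. destruct Hm as [x [_ [Ex Hx]]]. destruct Hm' as [y [_ [Ey Hy]]].
      assert (a <> p) by (intro E; subst; auto).
      pose proof (Hsep a p (or_introl eq_refl) (or_intror Hp) H).
      pose proof (dist_tri X a x p). pose proof (dist_tri X x y p).
      pose proof (Hdel j x y Ex Ey). rewrite dist_sym in Hx. lra.
    - assert (lsum (fun p => dp p j) ps <= d j). { apply IH; auto.
        intros; apply Hps; simpl; auto. intros; apply Hsep; simpl; auto. }
      lra. }
  destruct (ex_uniform (fun p n => c <= sum_f_R0 (fun j => 2 * dp p j) n + eps) ps) as [N HN].
  { intros p n m Hnm H. pose proof (sum_mono_n (fun j => 2 * dp p j) n m). 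
    assert (sum_f_R0 (fun j => 2 * dp p j) n <= sum_f_R0 (fun j => 2 * dp p j) m).
    { apply H0; auto. intro i; specialize (Hdp0 p i); lra. } lra. }
  { exact C1. }
  assert (H1 : lsum (fun _ => c - eps) ps <= lsum (fun p => sum_f_R0 (fun j => 2 * dp p j) N) ps).
  { apply lsum_le. intros p Hp. specialize (HN p Hp). lra. }
  rewrite lsum_const, lsum_swap in H1.
  assert (H2 : sum_f_R0 (fun j => lsum (fun p => 2 * dp p j) ps) N <= sum_f_R0 (fun j => 2 * d j) N).
  { apply sum_growing. intro j. rewrite lsum_scal. specialize (C2 j). lra. }
  assert (H3 : sum_f_R0 (fun j => 2 * d j) N = 2 * sum_f_R0 d N).
  { rewrite scal_sum. apply sum_eq. intros; ring. }
  specialize (Hsum N). fold d in Hsum. lra.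
Qed.
Lemma Rdiv_le_0_compat a b : 0 <= a -> 0 < b -> 0 <= a / b.
Proof. intros; unfold Rdiv; apply Rmult_le_pos; [lra|left; apply Rinv_0_lt_compat; lra]. Qed.

Lemma beta_term (X : Banach) (S : X -> Prop) x Rr m s :
  0 < Rr -> S x -> (forall y, S y -> Defs.dist y x <= m) -> 1 < s ->
  0 < beta S (Defs.ball x Rr) ->
  0 < Rmin m Rr /\
  rpow (beta S (Defs.ball x Rr)) s * diam (Defs.ball x Rr) <= Rmin m Rr * Rpower (Rmin m Rr / Rr) (s - 1).
Proof.
  intros HR Sx Hm Hs Hb.
  set (mm := Rmin m Rr).
  assert (Hm0 : 0 <= mm).
  { unfold mm, Rmin; destruct Rle_dec; try lra. specialize (Hm x Sx). rewrite dist_self in Hm; lra. }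
  destruct (classic (exists v : X, v <> vzero X)) as [[v Hv]|Hnv].
  2:{ exfalso. unfold beta in Hb. destruct excluded_middle_informative as [Hc|Hc]; [|lra].
      rewrite inf_empty in Hb; [lra|]. intros y [L [[p [w [Hw _]]] _]]. apply Hnv; eauto. }
  set (D := diam (Defs.ball x Rr)).
  assert (HnV := norm_pos X v Hv).
  set (u := vscal X (Rr / vnorm X v) v).
  assert (Hu : vnorm X u = Rr).
  { unfold u. rewrite vnorm_scal, Rabs_right. field; lra. apply Rle_ge, Rdiv_le_0_compat; lra. }
  assert (Hball2 : forall a b, Defs.ball x Rr a -> Defs.ball x Rr b -> Defs.dist a b <= 2 * Rr).
  { intros a b Ha Hb'. unfold Defs.ball in *. pose proof (dist_tri X a x b). rewrite (dist_sym X x b) in H. lra. }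
  assert (HD : Rr <= D).
  { unfold D. apply Rle_trans with (Defs.dist (vadd X x u) x); [rewrite dist_add; lra|]. apply dist_le_diam with (M := 2 * Rr); auto.
    - unfold Defs.ball. rewrite dist_add; lra.
    - unfold Defs.ball. rewrite dist_self; lra. }
  unfold beta in Hb |- *. fold D in Hb |- *.
  destruct excluded_middle_informative as [Hc|Hc]; [|lra].
  set (L0 := fun y => exists t : R, y = vadd X x (vscal X t v)).
  assert (HL0 : is_line X L0) by (exists x, v; split; auto; intro y; tauto).
  assert (HxL0 : L0 x) by (exists 0; rewrite scal0, vadd_0; auto).
  set (b0 := sup_set (fun r => exists y, S y /\ Defs.ball x Rr y /\ r = dist_set X y L0 / D)).
  assert (Hb0 : b0 <= mm / D).
  { apply sup_le. 2:{ apply Rdiv_le_0_compat; lra. }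
    intros r [y [Sy [By ->]]]. unfold Rdiv. apply Rmult_le_compat_r. left; apply Rinv_0_lt_compat; lra.
    apply Rle_trans with (Defs.dist y x).
    - apply inf_le with (M := 0). exists x; auto. intros z [w [_ ->]]. apply dist_nonneg.
    - unfold mm, Rmin. unfold Defs.ball in By. specialize (Hm y Sy). destruct Rle_dec; lra. }
  set (be := inf_set _) in *.
  assert (Hbe : be <= b0).
  { apply inf_le with (M := 0). exists L0; split; auto.
    intros y [L [_ ->]]. apply sup_ge0. intros r [z [_ [_ ->]]]. apply Rdiv_le_0_compat; [|lra].
    apply inf_ge0. intros w [w' [_ ->]]. apply dist_nonneg. }
  assert (Hmm : 0 < mm).
  { destruct Hm0; auto. exfalso. rewrite <- H in Hb0. unfold Rdiv in Hb0. rewrite Rmult_0_l in Hb0. lra. }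
  split; [exact Hmm|].
  unfold rpow. destruct Rlt_dec; [|lra].
  assert (E1 : Rpower be s <= Rpower (mm / D) s).
  { apply Rle_Rpower_l; lra. }
  assert (Hq : 0 < mm / D) by (apply Rdiv_lt_0_compat; lra).
  assert (E2 : Rpower (mm / D) s = mm / D * Rpower (mm / D) (s - 1)).
  { replace s with (1 + (s - 1)) at 1 by ring. rewrite Rpower_plus, Rpower_1; auto. }
  assert (E3 : Rpower (mm / D) (s - 1) <= Rpower (mm / Rr) (s - 1)).
  { apply Rle_Rpower_l. lra. split; auto. unfold Rdiv. apply Rmult_le_compat_l; [lra|].
    apply Rinv_le_contravar; lra. }
  assert (E4 : 0 <= Rpower (mm / D) (s - 1)) by (unfold Rpower; left; apply exp_pos).
  apply Rle_trans with (Rpower (mm / D) s * D). apply Rmult_le_compat_r; lra.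
  rewrite E2. replace (mm / D * Rpower (mm / D) (s - 1) * D) with (mm * Rpower (mm / D) (s - 1)) by (field; lra).
  apply Rmult_le_compat_l; lra.
Qed.

Section G.
Context {T : Type}.
Lemma lsum_split (f : T -> R) (p : T -> bool) l :
  lsum f l = lsum f (filter p l) + lsum f (filter (fun e => negb (p e)) l).
Proof. induction l; simpl. ring. destruct (p a); simpl; rewrite IHl; ring. Qed.

Lemma lsum_filter_zero (f : T -> R) (p : T -> bool) l :
  (forall x, In x l -> p x = false -> f x = 0) -> lsum f l = lsum f (filter p l).
Proof.
  intros H. rewrite (lsum_split f p l). rewrite (lsum_zero f (filter (fun e => negb (p e)) l)). ring.
  intros x Hx. apply filter_In in Hx. destruct Hx as [Hx Hp]. apply H; auto.
  destruct (p x); simpl in *; auto; discriminate.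
Qed.

End G.
Section G2.
Context {T : Type}.
Lemma group (f : Z * T -> R) (B : nat -> R) K n : forall l,
  NoDup l -> (forall e, In e l -> (K - Z.of_nat n <= fst e <= K)%Z) ->
  (forall j l'', (j <= n)%nat -> NoDup l'' -> incl l'' l ->
     (forall e, In e l'' -> fst e = (K - Z.of_nat j)%Z) -> lsum f l'' <= B j) ->
  lsum f l <= sum_f_R0 B n.
Proof.
  induction n; intros l Hnd Hr HB.
  - simpl. apply HB; auto. intros x Hx; auto. intros e He. specialize (Hr e He). simpl in Hr. lia.
  - set (p := fun e : Z * T => Z.eqb (fst e) (K - Z.of_nat (S n))).
    rewrite (lsum_split f p l). simpl sum_f_R0.
    assert (H1 : lsum f (filter p l) <= B (S n)).
    { apply HB; auto. apply NoDup_filter; auto. intros x Hx. apply filter_In in Hx; tauto.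
      intros e He. apply filter_In in He. destruct He as [_ He]. unfold p in He. apply Z.eqb_eq in He; auto. }
    assert (H2 : lsum f (filter (fun e => negb (p e)) l) <= sum_f_R0 B n).
    { apply IHn. apply NoDup_filter; auto.
      - intros e He. apply filter_In in He. destruct He as [He Hp]. specialize (Hr e He).
        unfold p in Hp. destruct (Z.eqb_spec (fst e) (K - Z.of_nat (S n))); simpl in Hp; try discriminate. lia.
      - intros j l'' Hj Hnd'' Hinc Hf. apply HB; auto.
        intros x Hx. apply Hinc in Hx. apply filter_In in Hx; tauto. }
    lra.
Qed.

Lemma list_max (l : list (Z * T)) : l <> nil ->
  exists K, (exists e, In e l /\ fst e = K) /\ forall e, In e l -> (fst e <= K)%Z.
Proof.
  induction l as [|a l IH]; intros H. congruence.
  destruct l as [|b l'].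
  - exists (fst a). split. exists a; simpl; auto. intros e [->|[]]; lia.
  - destruct IH as [K [[e0 [He0 HK0]] HK]]. discriminate.
    exists (Z.max (fst a) K). split.
    + destruct (Z.le_ge_cases (fst a) K).
      * exists e0. split. simpl; auto. lia.
      * exists a. split. simpl; auto. lia.
    + intros e [->|He]. lia. specialize (HK e He). lia.
Qed.

Lemma list_min (l : list (Z * T)) : exists m, forall e, In e l -> (m <= fst e)%Z.
Proof.
  induction l as [|a l [m Hm]]. exists 0%Z; intros e [].
  exists (Z.min m (fst a)). intros e [->|He]. lia. specialize (Hm e He). lia.
Qed.
End G2.

Lemma Rpower_one z : Rpower 1 z = 1.
Proof. unfold Rpower. rewrite ln_1, Rmult_0_r, exp_0; reflexivity. Qed.

Lemma Rpower_pow_base (b z : R) j : 0 < b -> Rpower (b ^ j) z = (Rpower b z) ^ j.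
Proof.
  intros Hb. induction j; simpl. apply Rpower_one.
  rewrite <- IHj. rewrite Rpower_mult_distr; auto. apply pow_lt; auto.
Qed.

Lemma bpow_shift K j : bpow K = bpow (K - Z.of_nat j) * (/2)^j.
Proof.
  unfold bpow. replace (- K)%Z with (- (K - Z.of_nat j) + - Z.of_nat j)%Z by lia.
  rewrite powerRZ_add by lra. f_equal. rewrite powerRZ_neg', <- pow_powerRZ, pow_inv. reflexivity.
Qed.

Lemma bpow_pos k : 0 < bpow k.
Proof. unfold bpow. apply powerRZ_lt; lra. Qed.

Lemma nodup_map_snd {T : Type} (l : list (Z * T)) k :
  NoDup l -> (forall e, In e l -> fst e = k) -> NoDup (map snd l).
Proof.
  induction l as [|a l IH]; intros Hnd Hk; simpl. constructor.
  inversion Hnd; subst. constructor.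
  - intro H. apply in_map_iff in H. destruct H as [e [He Hin]].
    apply H1. replace a with e; auto. destruct e, a. simpl in *.
    pose proof (Hk (z, t) (or_intror Hin)). pose proof (Hk (z0, t0) (or_introl eq_refl)). simpl in *. congruence.
  - apply IH; auto. intros; apply Hk; simpl; auto.
Qed.

Theorem mainTheorem19 :
  forall s : R, 1 < s ->
  exists C : R, 0 < C /\
  forall (X : Banach) (Sig : X -> Prop) (Xk : Z -> X -> Prop) (A : R),
    connected Sig ->
    1 < A ->
    multiresolution_nets Sig Xk ->
    forall h : R, H1_le Sig h ->
    forall l : list (Z * X), NoDup l ->
      (forall kx, In kx l ->
         Xk (fst kx) (snd kx) /\
         (beta Sig (mball A kx) = 0 \/
          (forall y, Sig y -> mball (12 * A) kx y))) ->
      lsum (fun kx => rpow (beta Sig (mball A kx)) s * diam (mball A kx)) l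
        <= C * A * h.
Proof.
  intros s Hs.
  set (q := Rpower (/2) (s-1)).
  assert (Hq0 : 0 < q) by (unfold q, Rpower; apply exp_pos).
  assert (Hq1 : q < 1).
  { unfold q, Rpower. rewrite ln_Rinv by lra. apply (Rlt_le_trans _ (exp 0)); [|rewrite exp_0; lra].
    apply exp_increasing.
    pose proof ln_lt_2. assert (0 < ln 2) by lra. assert (0 < s - 1) by lra. nra. }
  set (P24 := Rpower 24 (s-1)).
  assert (HP : 0 < P24) by (unfold P24, Rpower; apply exp_pos).
  exists (6 * P24 / (1 - q)). split.
  { apply Rdiv_lt_0_compat; lra. }
  intros X Sig Xk A Hcon HA Hnets h HH l Hnd Hl.
  destruct Hnets as [Hnest Hnet].
  assert (Hh : 0 <= h).
  { apply (approx_le 0 h 1); [lra|]. intros eps He.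
    destruct (HH 1 ltac:(lra) eps He) as [Es [_ [_ Hsum]]]. specialize (Hsum 0%nat).
    simpl in Hsum. pose proof (diam_ge0 X (Es 0%nat)). lra. }
  assert (Hd2h : forall y z, Sig y -> Sig z -> Defs.dist y z <= 2*h).
  { intros y z Sy Sz. destruct (dist_nonneg X y z) as [Hp|E]; [|rewrite <- E; lra].
    pose proof (sep_H1 X Sig h (Defs.dist y z) (z :: nil) Hcon HH Hp) as H.
    simpl in H. rewrite Rmult_1_l in H. apply H.
    - constructor; [intros []|constructor].
    - intros p [<-|[]]. split; auto. exists y; split; auto; lra.
    - intros p p' [<-|[]] [<-|[]] Hne; congruence. }
  set (d := diam Sig).
  assert (Hdd : forall y z, Sig y -> Sig z -> Defs.dist y z <= d).
  { intros; apply dist_le_diam with (M := 2*h); auto. }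
  assert (Hd2 : d <= 2*h).
  { apply sup_le; [intros r [y [z [Sy [Sz ->]]]]; auto | lra]. }
  set (f := fun kx => rpow (beta Sig (mball A kx)) s * diam (mball A kx)).
  set (pb := fun kx => if Rlt_dec 0 (beta Sig (mball A kx)) then true else false).
  rewrite (lsum_filter_zero f pb l).
  2:{ intros x Hx Hp. unfold pb in Hp. destruct Rlt_dec; try discriminate.
      unfold f, rpow. destruct Rlt_dec; [lra|]. ring. }
  set (l' := filter pb l).
  assert (Hl' : forall e, In e l' -> Xk (fst e) (snd e) /\ 0 < beta Sig (mball A e) /\
                 forall y, Sig y -> mball (12*A) e y).
  { intros e He. apply filter_In in He. destruct He as [He Hp]. unfold pb in Hp.
    destruct Rlt_dec as [Hb|]; try discriminate.
    destruct (Hl e He) as [Hx [E|Hin]].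
    - rewrite E in Hb; lra.
    - auto. }
  assert (Hnd' : NoDup l') by (apply NoDup_filter; auto).
  assert (HSx : forall e, In e l' -> Sig (snd e)).
  { intros e He. destruct (Hl' e He) as [Hx _]. destruct (Hnet (fst e)) as [Hs' _]; auto. }
  assert (H24 : forall e, In e l' -> d <= 24 * (A * bpow (fst e))).
  { intros e He. destruct (Hl' e He) as [_ [_ Hin]]. pose proof (bpow_pos (fst e)).
    apply sup_le; [|nra]. intros r [y [z [Sy [Sz ->]]]].
    pose proof (Hin y Sy) as H1. pose proof (Hin z Sz) as H2. unfold mball, Defs.ball in H1, H2.
    pose proof (dist_tri X y (snd e) z) as H3. rewrite (dist_sym X (snd e) z) in H3. lra. }
  assert (Hterm : forall e, In e l' -> 0 < d /\
           f e <= Rmin d (A * bpow (fst e)) * Rpower (d / (A * bpow (fst e))) (s-1)).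
  { intros e He. destruct (Hl' e He) as [_ [Hb _]]. pose proof (HSx e He) as Sx.
    destruct e as [k x]. simpl in *.
    assert (HR : 0 < A * bpow k) by (pose proof (bpow_pos k); nra).
    destruct (beta_term X Sig x (A * bpow k) d s HR Sx) as [Hm Hf]; auto.
    assert (Hd0 : 0 < d) by (pose proof (Rmin_l d (A * bpow k)); lra).
    split; auto.
    unfold f, mball; simpl. eapply Rle_trans; [exact Hf|]. apply Rmult_le_compat_l; [lra|].
    apply Rle_Rpower_l; [lra|]. split. apply Rdiv_lt_0_compat; lra.
    unfold Rdiv; apply Rmult_le_compat_r; [left; apply Rinv_0_lt_compat; lra| apply Rmin_l]. }
  destruct (classic (l' = nil)) as [E|Hne].
  { rewrite E. simpl. assert (0 <= 6 * P24 / (1 - q)) by (left; apply Rdiv_lt_0_compat; lra).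
    apply Rmult_le_pos; [|lra]. apply Rmult_le_pos; lra. }
  destruct (list_max l' Hne) as [K [[e0 [He0 HK0]] HK]].
  destruct (list_min l') as [m Hm].
  set (n := Z.to_nat (K - m)).
  set (B := fun j : nat => 6 * h * A * (P24 * q^j)).
  apply Rle_trans with (sum_f_R0 B n).
  - apply (group f B K n l' Hnd').
    + intros e He. specialize (HK e He); specialize (Hm e He). unfold n. rewrite Z2Nat.id by lia. lia.
    + intros j l'' Hj Hnd'' Hinc Hlev.
      set (k := (K - Z.of_nat j)%Z) in *.
      assert (HW0 : 0 <= P24 * q^j) by (pose proof (pow_lt q j Hq0); nra).
      assert (Hbk := bpow_pos k).
      assert (HW : forall e, In e l'' -> f e <= Rmin d (A * bpow k) * (P24 * q^j)).
      { intros e He. pose proof (Hinc e He) as He'. destruct (Hterm e He') as [Hd0 Hf].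
        rewrite (Hlev e He) in Hf. eapply Rle_trans; [exact Hf|].
        apply Rmult_le_compat_l. { left; apply Rmin_glb_lt; nra. }
        assert (E1 : d <= 24 * (A * (bpow k * (/2)^j))).
        { pose proof (bpow_shift K j) as Es. fold k in Es. rewrite <- Es. pose proof (H24 e0 He0) as H. rewrite HK0 in H. exact H. }
        unfold P24, q. rewrite <- Rpower_pow_base by lra.
        rewrite Rpower_mult_distr by (try apply pow_lt; lra).
        apply Rle_Rpower_l; [lra|]. split. apply Rdiv_lt_0_compat; nra.
        assert (Hh2 : 0 < (/2)^j) by (apply pow_lt; lra).
        apply (Rmult_le_reg_r (A * bpow k)). nra.
        unfold Rdiv. rewrite Rmult_assoc, Rinv_l by nra. nra. }
      destruct (Rlt_le_dec d (bpow k)) as [Hsmall|Hbig].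
      * destruct l'' as [|e1 [|e2 l3]].
        -- simpl. unfold B. apply Rmult_le_pos; auto. nra.
        -- simpl. unfold B. pose proof (HW e1 (or_introl eq_refl)).
           pose proof (Rmin_l d (A * bpow k)).
           assert (Rmin d (A * bpow k) * (P24 * q^j) <= d * (P24 * q^j)) by (apply Rmult_le_compat_r; auto).
           assert (d * (P24 * q^j) <= 2 * h * (P24 * q^j)) by (apply Rmult_le_compat_r; auto).
           assert (0 <= h * (P24 * q^j)) by (apply Rmult_le_pos; auto).
           assert (2 * h * (P24 * q^j) <= 6 * h * A * (P24 * q^j)) by nra.
           lra.
        -- exfalso. inversion Hnd''; subst.
           assert (Hne12 : e1 <> e2) by (intro E; apply H1; subst; simpl; auto).
           pose proof (Hlev e1 (or_introl eq_refl)) as L1.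
           pose proof (Hlev e2 (or_intror (or_introl eq_refl))) as L2.
           assert (Hs12 : snd e1 <> snd e2).
           { intro E. apply Hne12. destruct e1, e2; simpl in *; congruence. }
           pose proof (Hinc e1 (or_introl eq_refl)) as I1.
           pose proof (Hinc e2 (or_intror (or_introl eq_refl))) as I2.
           destruct (Hl' e1 I1) as [X1 _]. destruct (Hl' e2 I2) as [X2 _].
           rewrite L1 in X1. rewrite L2 in X2.
           destruct (Hnet k) as [_ [Hsep _]].
           pose proof (Hsep _ _ X1 X2 Hs12). pose proof (Hdd _ _ (HSx e1 I1) (HSx e2 I2)). lra.
      * set (c := bpow k / 3).
        assert (Hc : 0 < c) by (unfold c; lra).
        assert (Hlen : INR (length (map snd l'')) * c <= 2 * h).
        { apply (sep_H1 X Sig h c (map snd l'') Hcon HH Hc).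
          - apply (nodup_map_snd l'' k); auto.
          - intros p Hp. apply in_map_iff in Hp. destruct Hp as [e [<- He]].
            split. apply HSx; auto.
            destruct (classic (exists y z, Sig y /\ Sig z /\ 2 * c < Defs.dist y z)) as [[y [z [Sy [Sz Hyz]]]]|Hn].
            + pose proof (dist_tri X y (snd e) z).
              destruct (Rle_lt_dec c (Defs.dist y (snd e))).
              * exists y; auto.
              * exists z. split; auto. rewrite dist_sym. lra.
            + exfalso. assert (d <= 2 * c); [|unfold c in *; lra].
              apply sup_le; [|lra]. intros r [y [z [Sy [Sz ->]]]].
              apply Rnot_lt_le. intro. apply Hn; eauto.
          - intros p p' Hp Hp' Hne'.
            apply in_map_iff in Hp. destruct Hp as [e [<- He]].
            apply in_map_iff in Hp'. destruct Hp' as [e' [<- He']].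
            destruct (Hl' e (Hinc e He)) as [X1 _]. destruct (Hl' e' (Hinc e' He')) as [X2 _].
            rewrite (Hlev e He) in X1. rewrite (Hlev e' He') in X2.
            destruct (Hnet k) as [_ [Hsep _]].
            pose proof (Hsep _ _ X1 X2 Hne'). unfold c. lra. }
        rewrite map_length in Hlen.
        apply Rle_trans with (lsum (fun _ => A * bpow k * (P24 * q^j)) l'').
        { apply lsum_le. intros e He. eapply Rle_trans; [apply HW; auto|].
          apply Rmult_le_compat_r; auto. apply Rmin_r. }
        rewrite lsum_const. unfold B. unfold c in Hlen.
        assert (INR (length l'') * bpow k <= 6 * h) by lra.
        assert (0 <= A * (P24 * q^j)) by nra.
        replace (INR (length l'') * (A * bpow k * (P24 * q ^ j))) with
          ((INR (length l'') * bpow k) * (A * (P24 * q^j))) by ring.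
        replace (6 * h * A * (P24 * q ^ j)) with ((6 * h) * (A * (P24 * q^j))) by ring.
        apply Rmult_le_compat_r; auto.
  - assert (HG : sum_f_R0 (fun j => q^j) n * (1 - q) <= 1).
    { pose proof (GP_finite q n). pose proof (pow_lt q (n+1) Hq0). nra. }
    assert (HG' : sum_f_R0 (fun j => q^j) n <= / (1 - q)).
    { apply (Rmult_le_reg_r (1 - q)). lra. rewrite Rinv_l by lra. exact HG. }
    assert (E : sum_f_R0 B n = (6 * h * A * P24) * sum_f_R0 (fun j => q^j) n).
    { rewrite scal_sum. apply sum_eq. intros i _. unfold B. ring. }
    rewrite E.
    replace (6 * P24 / (1 - q) * A * h) with ((6 * h * A * P24) * / (1 - q)) by (field; lra).
    apply Rmult_le_compat_l; auto. apply Rmult_le_pos; [|lra]. apply Rmult_le_pos; lra.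
Qed.
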